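(* Let $n\ge3$. For a positive integer $k$ let $p_k=k\left(1-3\frac{k-1}{n-1}\right)$ and $q_k=3\left(1-15\frac{k-1}{n-1}+30\frac{(k-1)(k-2)}{(n-1)(n-2)}\right)$. Then: 1. If $1\le k_1<k_2\le n$, then $p_{k_1}q_{k_2}-p_{k_2}q_{k_1}=\frac{3(n+8)}{(n-1)^2(n-2)}(k_1-k_2)G(k_1,k_2)$. 2. If $1\le k_1<k_2<k_3\le n$, then $\sum_{i=1}^3k_i(n+2-3k_i)(k_{i+1}-k_{i+2})G(k_{i+1},k_{i+2})=0$, indices taken mod 3 ($k_4=k_1$, $k_5=k_2$). 3. If $1\le k_1<k_2<k_3<k_4\le n$ and $G(k_2,k_3)\le 0$, then (a) $k_2<\frac{n+2}3$ and $k_3>\frac{n+2}3$; (b) $p_{k_2}>0$ and $p_{k_3}<0$; (c) $G(k_1,k_2)>0$ and $G(k_3,k_4)>0$.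
   Context: For positive integers $k_1,k_2\le n$, $G(k_1,k_2)=(n+2-3k_1)(n+2-3k_2)+6(k_1-1)(k_2-1)+2(n-1)$. *)

(* Defs.v *)
From mathcomp Require Import all_boot all_order all_algebra.
Set Implicit Arguments. Unset Strict Implicit. Unset Printing Implicit Defensive.
Import Order.TTheory GRing.Theory Num.Theory.
Local Open Scope ring_scope.

(* G(k1,k2) = (n+2-3k1)(n+2-3k2) + 6(k1-1)(k2-1) + 2(n-1), computed in rat
   (so subtraction is genuine, not truncated). *)
Definition G (n k1 k2 : nat) : rat :=
  (n%:R + 2 - 3 * k1%:R) * (n%:R + 2 - 3 * k2%:R)
  + 6 * (k1%:R - 1) * (k2%:R - 1) + 2 * (n%:R - 1).

Definition p (n k : nat) : rat :=
  k%:R * (1 - 3 * (k%:R - 1) / (n%:R - 1)).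

Definition q (n k : nat) : rat :=
  3 * (1 - 15 * (k%:R - 1) / (n%:R - 1)
       + 30 * (k%:R - 1) * (k%:R - 2) / ((n%:R - 1) * (n%:R - 2))).

(* Main.v *)
Require Import Defs.
From mathcomp Require Import all_boot all_order all_algebra.
From mathcomp Require Import ring lra zify.
Import Order.TTheory GRing.Theory Num.Theory.
Local Open Scope ring_scope.

Theorem lemma3p4 (n : nat) (hn : (3 <= n)%N) :
  (forall k1 k2 : nat, (1 <= k1)%N -> (k1 < k2)%N -> (k2 <= n)%N ->
     p n k1 * q n k2 - p n k2 * q n k1
     = 3 * (n%:R + 8) / ((n%:R - 1) ^+ 2 * (n%:R - 2))
       * (k1%:R - k2%:R) * G n k1 k2)
  /\
  (forall k1 k2 k3 : nat,
     (1 <= k1)%N -> (k1 < k2)%N -> (k2 < k3)%N -> (k3 <= n)%N ->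
     k1%:R * (n%:R + 2 - 3 * k1%:R) * (k2%:R - k3%:R) * G n k2 k3
     + k2%:R * (n%:R + 2 - 3 * k2%:R) * (k3%:R - k1%:R) * G n k3 k1
     + k3%:R * (n%:R + 2 - 3 * k3%:R) * (k1%:R - k2%:R) * G n k1 k2 = 0)
  /\
  (forall k1 k2 k3 k4 : nat,
     (1 <= k1)%N -> (k1 < k2)%N -> (k2 < k3)%N -> (k3 < k4)%N -> (k4 <= n)%N ->
     G n k2 k3 <= 0 ->
     [/\ (k2%:R < (n%:R + 2) / 3 :> rat) /\ ((n%:R + 2) / 3 < k3%:R :> rat),
         (0 < p n k2) /\ (p n k3 < 0)
       & (0 < G n k1 k2) /\ (0 < G n k3 k4)]).
Proof.
have hN : (3 <= n%:R :> rat) by rewrite (ler_nat rat 3 n).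
have h1 : (n%:R - 1 != 0 :> rat) by apply/eqP => h; lra.
have h2 : (n%:R - 2 != 0 :> rat) by apply/eqP => h; lra.
split; [|split].
- move=> k1 k2 _ _ _; rewrite /p /q /G; field.
  by rewrite h1 h2.
- move=> k1 k2 k3 _ _ _ _; rewrite /G; ring.
move=> k1 k2 k3 k4 l1 l12 l23 l34 l4 HG.
have L1 : (1 <= k1%:R :> rat) by rewrite (ler_nat rat 1 k1).
have L12 : (k1%:R + 1 <= k2%:R :> rat) by rewrite natr1 ler_nat.
have L23 : (k2%:R + 1 <= k3%:R :> rat) by rewrite natr1 ler_nat.
have L34 : (k3%:R + 1 <= k4%:R :> rat) by rewrite natr1 ler_nat.
have L4 : (k4%:R <= n%:R :> rat) by rewrite ler_nat.
move: HG; rewrite /G => HG.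
set N := n%:R in hN h1 h2 HG L4 *.
set a := k1%:R in L1 L12 *.
set b := k2%:R in L12 L23 HG *.
set c := k3%:R in L23 L34 HG *.
set d := k4%:R in L34 L4 *.
have Ha : 0 < N + 2 - 3 * b by nra.
have Hb : N + 2 - 3 * c < 0 by nra.
have Hn1 : 0 < N - 1 by lra.
have pe : forall k : rat, k * (1 - 3 * (k - 1) / (N - 1)) = k * (N + 2 - 3 * k) / (N - 1).
  by move=> k; field.
rewrite /p -/N -/b -/c !pe.
split; [split; lra| split | split].
- by apply: divr_gt0 => //; nra.
- rewrite ltr_pdivrMr //; nra.
- nra.
- nra.
Qed.
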